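(* Suppose that there exist absolute constants $c_1'>1$, $c_2'>0$, $c_3'>0$ and $c_4'>0$ such that \begin{align*} \frac{1}{c_1'}\, d_n^2(\lambda_0,\lambda_1)\le \frac{1}{n}\mathrm{KL}\big(\mathsf{P}^{(n)}_{\lambda_0}, \mathsf{P}^{(n)}_{\lambda_1}\big)\le c_1'\, d_n^2(\lambda_0,\lambda_1) \end{align*} and \begin{align*} \mathsf{P}_{\lambda_0}^{(n)}\exp\Big\{t\Big(\log\frac{q_n(\lambda_0,Y^{(n)})}{q_n(\lambda_1,Y^{(n)})} - \mathrm{KL}\big(\mathsf{P}^{(n)}_{\lambda_0}, \mathsf{P}^{(n)}_{\lambda_1}\big)\Big)\Big\}\le c_2'\exp\big(c_3't^2n\, d_n^2(\lambda_0,\lambda_1)\big) \end{align*} for any $t\in[-c_4',c_4']$, any $\lambda_0,\lambda_1\in\Lambda_n$ and any sufficiently large $n\in\mathbb{N}$. Then there exist absolute constants $\rho_\circ\in(0,1)$, $\rho_{+}>1$, $a_2\ge a_1\in\mathbb{R}$ and $c_2\ge c_1>0$ such that \begin{align*} a_1+c_1 n d_n^2(\lambda_0,\lambda_1)\le \mathsf{D}_{\rho_\circ}\big(\mathsf{P}^{(n)}_{\lambda_0},\mathsf{P}^{(n)}_{\lambda_1}\big),\qquad \mathsf{D}_{\rho_{+}}\big(\mathsf{P}^{(n)}_{\lambda_0},\mathsf{P}^{(n)}_{\lambda_1}\big)\le a_2+c_2 n d_n^2(\lambda_0,\lambda_1) \end{align*} for any $\lambda_0,\lambda_1\in\Lambda_n$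 and any sufficiently large $n$.
   Context: For each $n\in\mathbb{N}$ a sample $Y^{(n)}$ takes values in a measurable space $\mathfrak{Y}_n$ with a $\sigma$-finite reference measure $\mu_n$. The natural parameter space $\Lambda_n$ is equipped with a metric $d_n$, and $q_n:\Lambda_n\times\mathfrak{Y}_n\to(0,\infty)$ is a likelihood with $\int q_n(\lambda,y)\,\mu_n(dy)=1$; $\mathsf{P}^{(n)}_\lambda(dy)=q_n(\lambda,y)\mu_n(dy)$ and $\mathsf{P}^{(n)}_\lambda g$ denotes expectation of $g$ under $\mathsf{P}^{(n)}_\lambda$. $\mathrm{KL}(\mathsf{P}_1,\mathsf{P}_2)=\int\log(d\mathsf{P}_1/d\mathsf{P}_2)\,d\mathsf{P}_1$, and for $\rho\in(0,1)\cup(1,\infty)$ the Rényi divergence is $\mathsf{D}_\rho(\mathsf{P}_1,\mathsf{P}_2)=\frac{1}{\rho-1}\log\int (d\mathsf{P}_1/d\mathsf{P}_2)^{\rho-1}d\mathsf{P}_1$ (both $+\infty$ if $\mathsf{P}_1\not\ll\mathsf{P}_2$). *)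

(* Defs.v *)
From HB Require Import structures.
From mathcomp Require Import all_boot all_order all_algebra.
From mathcomp Require Import all_classical all_reals all_analysis.
Set Implicit Arguments. Unset Strict Implicit. Unset Printing Implicit Defensive.
Import Order.TTheory GRing.Theory Num.Theory.
Local Open Scope classical_set_scope.
Local Open Scope ring_scope.

Definition is_metric (R : realType) (L : Type) (d : L -> L -> R) : Prop :=
  (forall x y, 0 <= d x y) /\ (forall x y, d x y = 0 <-> x = y) /\
  (forall x y, d x y = d y x) /\ (forall x y z, d x z <= d x y + d y z).

(* KL(P_{l0}, P_{l1}) = \int log(dP0/dP1) dP0 = \int q0 log(q0/q1) dmu
   (densities are strictly positive so P0 << P1) *)
Definition KLq (dT : measure_display) (T : measurableType dT) (R : realType)
  (mu : {measure set T -> \bar R}) (q0 q1 : T -> R) : \bar R :=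
  (\int[mu]_y (ln (q0 y / q1 y) * q0 y)%:E)%E.

Definition Eq (dT : measure_display) (T : measurableType dT) (R : realType)
  (mu : {measure set T -> \bar R}) (q0 : T -> R) (g : T -> R) : \bar R :=
  (\int[mu]_y (g y * q0 y)%:E)%E.

(* Renyi divergence D_rho(P0,P1) = 1/(rho-1) log \int (dP0/dP1)^(rho-1) dP0,
   with log(+oo) = +oo. *)
Definition Renyiq (dT : measure_display) (T : measurableType dT) (R : realType)
  (mu : {measure set T -> \bar R}) (rho : R) (q0 q1 : T -> R) : \bar R :=
  match Eq mu q0 (fun y => (q0 y / q1 y) `^ (rho - 1)) with
  | r%:E => (ln r / (rho - 1))%:E
  | +oo%E => if 1 < rho then +oo%E else -oo%E
  | -oo%E => -oo%E
  end.

(* Main.v *)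
Require Import Defs.
From HB Require Import structures.
From mathcomp Require Import all_boot all_order all_algebra.
From mathcomp Require Import all_classical all_reals all_analysis.
From mathcomp Require Import measurable_realfun.
From mathcomp Require Import ring lra.
Import Order.TTheory GRing.Theory Num.Theory.
Local Open Scope classical_set_scope.
Local Open Scope ring_scope.

Lemma muT_neq0 (dT : measure_display) (T : measurableType dT) (R : realType)
  (mu : {measure set T -> \bar R}) (q0 : T -> R) :
  (forall y, 0 < q0 y) -> measurable_fun setT q0 ->
  (\int[mu]_y (q0 y)%:E = 1)%E -> mu setT <> 0%E.
Proof.
move=> q0p mq0 int1 mu0.
have := @integral_abs_eq0 _ _ _ mu setT (fun y => (q0 y)%:E) measurableT
  (proj2 (measurable_EFinP _ _) mq0) mu0.
rewrite (eq_integral (fun y => (q0 y)%:E)); last first.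
  by move=> y _; rewrite gee0_abs // lee_fin ltW.
by rewrite int1 => /(congr1 fine) /eqP; rewrite /= oner_eq0.
Qed.

Lemma int_pos (dT : measure_display) (T : measurableType dT) (R : realType)
  (mu : {measure set T -> \bar R}) (f : T -> R) :
  mu setT <> 0%E -> (forall y, 0 < f y) -> measurable_fun setT f ->
  (0 < \int[mu]_y (f y)%:E)%E.
Proof.
move=> mu0 fp mf.
have mf' : measurable_fun setT (fun y => (f y)%:E) :=
  proj2 (measurable_EFinP _ _) mf.
rewrite lt_def integral_ge0 ?andbT; last by move=> y _; rewrite lee_fin ltW.
apply/eqP => i0.
have : (\int[mu]_(y in setT) `|(f y)%:E| = 0)%E.
  rewrite (eq_integral (fun y => (f y)%:E)) //.
  by move=> y _; rewrite gee0_abs // lee_fin ltW.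
move/(ae_eq_integral_abs mu measurableT mf') => [N [mN muN sN]].
apply: mu0; apply: (subset_measure0 _ _ _ muN) => // x _.
apply: sN => /= /(_ I) [] /eqP; by rewrite gt_eqF.
Qed.

Lemma Eq_scale (dT : measure_display) (T : measurableType dT) (R : realType)
  (mu : {measure set T -> \bar R}) (q0 q1 : T -> R) (s k : R) :
  (forall y, 0 < q0 y) -> (forall y, 0 < q1 y) ->
  measurable_fun setT q0 -> measurable_fun setT q1 ->
  Eq mu q0 (fun y => (q0 y / q1 y) `^ s) =
  ((expR (s * k))%:E * Eq mu q0 (fun y => expR (s * (ln (q0 y / q1 y) - k))))%E.
Proof.
move=> p0 p1 m0 m1.
have lnq y : ln (q0 y / q1 y) = ln (q0 y) - ln (q1 y).
  by rewrite lnM ?posrE ?invr_gt0 // lnV ?posrE.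
pose g y := expR (s * (ln (q0 y) - ln (q1 y) - k)) * q0 y.
have mg : measurable_fun setT g.
  apply: measurable_funM => //.
  apply: (measurableT_comp (@measurable_expR R)).
  apply: measurable_funM; first exact: measurable_cst.
  apply: measurable_funB; last exact: measurable_cst.
  by apply: measurable_funB; apply: (measurableT_comp (@measurable_ln R)).
rewrite /Eq [in RHS](eq_integral (fun y => (g y)%:E)); last first.
  by move=> y _; rewrite lnq.
rewrite -(@ge0_integralZl_EFin _ _ _ mu _ measurableT (fun y => (g y)%:E)); last 3 first.
- by move=> y _; rewrite lee_fin /g mulr_ge0 // ?expR_ge0 // ltW.
- exact/measurable_EFinP.
- exact: expR_ge0.
apply: eq_integral => y _; rewrite /g /powR gt_eqF ?divr_gt0 // lnq.
by rewrite -EFinM mulrA -expRD; congr (expR _ * _)%:E; ring.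
Qed.

Lemma M_pos (dT : measure_display) (T : measurableType dT) (R : realType)
  (mu : {measure set T -> \bar R}) (q0 q1 : T -> R) (s k : R) :
  (forall y, 0 < q0 y) -> (forall y, 0 < q1 y) ->
  measurable_fun setT q0 -> measurable_fun setT q1 ->
  (\int[mu]_y (q0 y)%:E = 1)%E ->
  (0 < Eq mu q0 (fun y => expR (s * (ln (q0 y / q1 y) - k))))%E.
Proof.
move=> p0 p1 m0 m1 i1.
have lnq y : ln (q0 y / q1 y) = ln (q0 y) - ln (q1 y).
  by rewrite lnM ?posrE ?invr_gt0 // lnV ?posrE.
pose g y := expR (s * (ln (q0 y) - ln (q1 y) - k)) * q0 y.
have mg : measurable_fun setT g.
  apply: measurable_funM => //.
  apply: (measurableT_comp (@measurable_expR R)).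
  apply: measurable_funM; first exact: measurable_cst.
  apply: measurable_funB; last exact: measurable_cst.
  by apply: measurable_funB; apply: (measurableT_comp (@measurable_ln R)).
rewrite /Eq (eq_integral (fun y => (g y)%:E)); last first.
  by move=> y _; rewrite lnq.
apply: int_pos => //; first exact: (@muT_neq0 _ _ _ mu q0).
by move=> y; rewrite /g mulr_gt0 // expR_gt0.
Qed.

Theorem lemma3p1 (R : realType)
  (dY : nat -> measure_display) (Y : forall n, measurableType (dY n))
  (mu : forall n, {measure set Y n -> \bar R})
  (Lam : nat -> Type) (dn : forall n, Lam n -> Lam n -> R)
  (q : forall n, Lam n -> Y n -> R) :
  (forall n, sigma_finite setT (mu n)) ->
  (forall n, is_metric (dn n)) ->
  (forall n l y, 0 < q n l y) ->
  (forall n l, measurable_fun setT (q n l)) ->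
  (forall n l, (\int[mu n]_y (q n l y)%:E = 1)%E) ->
  (exists c1' c2' c3' c4' : R,
     [/\ 1 < c1', 0 < c2', 0 < c3' & 0 < c4'] /\
     exists N : nat, forall n, (N <= n)%N -> forall l0 l1 : Lam n,
       ((c1'^-1 * dn n l0 l1 ^+ 2)%:E
          <= (n%:R^-1)%:E * KLq (mu n) (q n l0) (q n l1)
        /\ (n%:R^-1)%:E * KLq (mu n) (q n l0) (q n l1)
          <= (c1' * dn n l0 l1 ^+ 2)%:E)%E /\
       forall t : R, -c4' <= t <= c4' ->
         (Eq (mu n) (q n l0)
            (fun y => expR (t * (ln (q n l0 y / q n l1 y)
                                 - fine (KLq (mu n) (q n l0) (q n l1)))))
          <= (c2' * expR (c3' * t ^+ 2 * n%:R * dn n l0 l1 ^+ 2))%:E)%E) ->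
  exists (rho0 rhop a1 a2 c1 c2 : R),
    [/\ 0 < rho0 < 1, 1 < rhop, a1 <= a2, 0 < c1 & c1 <= c2] /\
    exists N : nat, forall n, (N <= n)%N -> forall l0 l1 : Lam n,
      ((a1 + c1 * n%:R * dn n l0 l1 ^+ 2)%:E
         <= Renyiq (mu n) rho0 (q n l0) (q n l1)
       /\ Renyiq (mu n) rhop (q n l0) (q n l1)
         <= (a2 + c2 * n%:R * dn n l0 l1 ^+ 2)%:E)%E.
Proof.
move=> sf met qpos qmeas qint [c1' [c2' [c3' [c4' [[hc1 hc2 hc3 hc4] [N HN]]]]]].
pose t := Num.min (Num.min c4' ((2 * c1' * c3')^-1)) (2^-1 : R).
have c1p : 0 < c1' by apply: lt_trans hc1.
have i2 : 0 < (2 * c1' * c3')^-1 by rewrite invr_gt0 !mulr_gt0.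
have tp : 0 < t.
 by rewrite /t !lt_min hc4 i2 /= invr_gt0 ltr0n.
have t4 : t <= c4' by rewrite /t !ge_min lexx.
have t2 : t <= (2 * c1' * c3')^-1 by rewrite /t !ge_min lexx orbT.
have th : t <= 2^-1 by rewrite /t !ge_min lexx orbT.
have ct : c3' * t <= (2 * c1')^-1.
  have -> : (2 * c1')^-1 = c3' * (2 * c1' * c3')^-1.
    by field; rewrite !gt_eqF.
  by rewrite ler_wpM2l // ltW.
pose L := `|ln c2'| / t.
have L0 : 0 <= L by rewrite divr_ge0 // ltW.
exists (1 - t), (1 + t), (- L), L, (2 * c1')^-1, (c1' + c3' * t).
split.
  split.
  - apply/andP; split; lra.
  - lra.
  - lra.
  - by rewrite invr_gt0 mulr_gt0.
  - have h : (2 * c1')^-1 <= 1 by rewrite invf_le1 ?mulr_gt0 //; lra.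
    have : 0 <= c3' * t by rewrite mulr_ge0 // ltW.
    lra.
exists (maxn N 1) => n; rewrite geq_max => /andP[nN n1] l0 l1.
have [[klo khi] hE] := HN n nN l0 l1.
set K := KLq _ _ _ in klo khi hE.
have np : 0 < n%:R :> R by rewrite ltr0n.
set D := n%:R * dn n l0 l1 ^+ 2.
have D0 : 0 <= D by rewrite mulr_ge0 ?sqr_ge0 // ltW.
have [k Kk [hk1 hk2]] : exists2 k, K = k%:E & c1'^-1 * D <= k /\ k <= c1' * D.
  clearbody K; move: klo khi hE; case: K => [k'||] klo khi hE.
  - rewrite -EFinM lee_fin in klo khi.
    exists k' => //; split; rewrite /D mulrCA.
      by have := ler_wpM2l (ltW np) klo; rewrite mulVKf ?gt_eqF.
    by have := ler_wpM2l (ltW np) khi; rewrite mulVKf ?gt_eqF.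
  - by move: khi; rewrite muleC gt0_mulye ?lte_fin ?invr_gt0.
  - by move: klo; rewrite muleC gt0_mulNye ?lte_fin ?invr_gt0.
rewrite Kk /= in hE.
have hEt s : -c4' <= s <= c4' -> exists2 m,
    Eq (mu n) (q n l0) (fun y => expR (s * (ln (q n l0 y / q n l1 y) - k)))
      = m%:E & 0 < m /\ ln m <= ln c2' + c3' * s ^+ 2 * D.
  move=> hs; have := hE s hs.
  have := @M_pos _ _ _ (mu n) (q n l0) (q n l1) s k (qpos n l0) (qpos n l1)
    (qmeas n l0) (qmeas n l1) (qint n l0).
  case: (Eq _ _ _) => [m||] //; move=> mp hm; exists m => //.
  rewrite lte_fin in mp; rewrite lee_fin in hm; split => //.
  rewrite -(@expRK _ (c3' * s ^+ 2 * D)) -lnM ?posrE ?expR_gt0 //.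
  rewrite ler_ln ?posrE ?mulr_gt0 ?expR_gt0 //.
  by rewrite /D (mulrA (c3' * s ^+ 2)).
have el x : 0 < x -> forall a, ln (expR a * x) = a + ln x.
  by move=> xp a; rewrite lnM ?posrE ?expR_gt0 // expRK.
have tn0 : t != 0 by rewrite gt_eqF.
have a : ln c2' / t <= L by rewrite /L ler_pM2r ?invr_gt0 // ler_norm.
have b : c3' * t * D <= (2 * c1')^-1 * D by rewrite ler_wpM2r.
have c : (2 * c1')^-1 = c1'^-1 / 2 by field; rewrite gt_eqF.
split.
- rewrite /Renyiq (_ : 1 - t - 1 = - t); last by ring.
  rewrite (@Eq_scale _ _ _ (mu n) (q n l0) (q n l1) (-t) k (qpos n l0)
    (qpos n l1) (qmeas n l0) (qmeas n l1)).
  have [|m -> [mp hm]] := hEt (- t); first by apply/andP; split; lra.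
  rewrite -EFinM lee_fin el //.
  have e : (- t * k + ln m) / - t = k - ln m / t by field.
  rewrite e sqrrN in hm *.
  have u : ln m / t <= ln c2' / t + c3' * t * D.
    have -> : ln c2' / t + c3' * t * D = (ln c2' + c3' * t ^+ 2 * D) / t.
      by field.
    by rewrite ler_pM2r ?invr_gt0.
  rewrite -mulrA -/D.
  move: c b; set z := (2 * c1')^-1; move=> c b.
  have zD : z * D = c1'^-1 * D / 2 by rewrite c; ring.
  lra.
- rewrite /Renyiq (_ : 1 + t - 1 = t); last by ring.
  rewrite (@Eq_scale _ _ _ (mu n) (q n l0) (q n l1) t k (qpos n l0)
    (qpos n l1) (qmeas n l0) (qmeas n l1)).
  have [|m -> [mp hm]] := hEt t; first by apply/andP; split; lra.
  rewrite -EFinM.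
  rewrite lee_fin el //.
  have e : (t * k + ln m) / t = k + ln m / t by field.
  rewrite e.
  have u : ln m / t <= ln c2' / t + c3' * t * D.
    have -> : ln c2' / t + c3' * t * D = (ln c2' + c3' * t ^+ 2 * D) / t.
      by field.
    by rewrite ler_pM2r ?invr_gt0.
  rewrite -mulrA -/D.
  lra.
Qed.
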